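(* Let $k$ be a field of characteristic $p>0$ with algebraic closure $\overline k$. Let $$\sigma(x)=\sum_{i=d}^{\infty}\alpha_i x^i\in\overline k((x)),$$ with $d\in\mathbb Z$ and $\alpha_i\in\overline k$ for all $i$, and let $L=k(\{\alpha_i\})\subset\overline k$ be the field generated over $k$ by the coefficients of $\sigma$. Assume $L$ is purely inseparable over $k$. Then $\sigma(x)$ is algebraic over $k((x))$ if and only if there exists $n\in\mathbb N$ such that $L^{p^n}\subset k$.
   Context: For a field $L$ of characteristic $p>0$ and $n\in\mathbb N$, $L^{p^n}=\{f^{p^n}\mid f\in L\}$. $\overline k((x))$ denotes the field of formal Laurent series in $x$ with coefficients in $\overline k$. *)

(* Defs.v *)
From HB Require Import structures.
From mathcomp Require Import all_boot all_order all_algebra.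
Set Implicit Arguments. Unset Strict Implicit. Unset Printing Implicit Defensive.
Import Order.TTheory GRing.Theory Num.Theory.
Local Open Scope ring_scope.

Definition is_subfield (K : fieldType) (S : {pred K}) : Prop :=
  [/\ 1 \in S,
      forall x y, x \in S -> y \in S -> x - y \in S,
      forall x y, x \in S -> y \in S -> x * y \in S &
      forall x, x \in S -> x^-1 \in S].

Definition in_gen_field (K : fieldType) (k : {pred K}) (alpha : int -> K) (y : K) : Prop :=
  forall S : {pred K}, is_subfield S -> {subset k <= S} ->
    (forall i, alpha i \in S) -> y \in S.

Definition algebraic_over (K : fieldType) (k : {pred K}) (x : K) : Prop :=
  exists q : {poly K}, [/\ q != 0, (forall i, q`_i \in k) & root q x].

(* Formal Laurent series over R:  a pair (d, a) represents
   x^d * sum_{n>=0} a n x^n. *)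
Definition lser (R : Type) : Type := (int * (nat -> R))%type.

Section Laurent.
Variable R : nzRingType.

Definition lcoef (s : lser R) (i : int) : R :=
  if (s.1 <= i)%R then s.2 `|i - s.1|%N else 0.

Definition lzero : lser R := (0%R, fun _ => 0).
Definition lone : lser R := (0%R, fun n => if n == 0%N then 1 else 0).

Definition ladd (s t : lser R) : lser R :=
  let m := Order.min s.1 t.1 in
  (m, fun n => lcoef s (m + n%:Z) + lcoef t (m + n%:Z)).

Definition lmul (s t : lser R) : lser R :=
  (s.1 + t.1, fun n => \sum_(i < n.+1) s.2 i * t.2 (n - i)%N).

Definition lexp (s : lser R) (j : nat) : lser R := iter j (lmul s) lone.

Definition lser_eq0 (s : lser R) : Prop := forall i, lcoef s i = 0.

Definition lpoly_eval (cs : seq (lser R)) (sigma : lser R) : lser R :=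
  foldr ladd lzero
    [seq lmul (nth lzero cs j) (lexp sigma j) | j <- iota 0 (size cs)].

Definition lser_over (k : {pred R}) (s : lser R) : Prop :=
  forall i, lcoef s i \in k.

Definition lser_algebraic (k : {pred R}) (sigma : lser R) : Prop :=
  exists cs : seq (lser R),
    [/\ forall j, lser_over k (nth lzero cs j),
        exists j, ~ lser_eq0 (nth lzero cs j) &
        lser_eq0 (lpoly_eval cs sigma)].
End Laurent.

(* Main.v *)
Require Import Defs.
From HB Require Import structures.
From mathcomp Require Import all_boot all_order all_algebra.
From Stdlib Require Import ClassicalEpsilon FunctionalExtensionality Lia Classical.
Import Order.TTheory GRing.Theory Num.Theory.
Local Open Scope ring_scope.
Set Implicit Arguments. Unset Strict Implicit. Unset Printing Implicit Defensive.

Record ps (R : Type) := PS { pc : nat -> R }.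

Lemma ps_ext R (a b : ps R) : (forall n, pc a n = pc b n) -> a = b.
Proof. case: a b => f [g] /= h; congr PS; exact: functional_extensionality. Qed.

Definition ps_eqb R (a b : ps R) : bool :=
  if excluded_middle_informative (a = b) then true else false.
Lemma ps_eqP R : Equality.axiom (@ps_eqb R).
Proof. by move=> a b; rewrite /ps_eqb; case: excluded_middle_informative => h; constructor. Qed.
HB.instance Definition _ R := hasDecEq.Build (ps R) (@ps_eqP R).

Definition ps_find R (P : pred (ps R)) (n : nat) : option (ps R) :=
  match excluded_middle_informative (exists x, P x) with
  | left h => Some (proj1_sig (constructive_indefinite_description _ h))
  | right _ => None end.

Lemma ps_find_correct R (P : pred (ps R)) n x : ps_find P n = Some x -> P x.
Proof.
rewrite /ps_find; case: excluded_middle_informative => // h [<-].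
by case: constructive_indefinite_description.
Qed.
Lemma ps_find_complete R (P : pred (ps R)) : (exists x, P x) -> exists n, ps_find P n.
Proof. by move=> h; exists 0%N; rewrite /ps_find; case: excluded_middle_informative. Qed.
Lemma ps_find_ext R (P Q : pred (ps R)) : P =1 Q -> ps_find P =1 ps_find Q.
Proof. by move=> h; have -> : P = Q by apply: functional_extensionality. Qed.
HB.instance Definition _ R := hasChoice.Build (ps R)
  (@ps_find_correct R) (@ps_find_complete R) (@ps_find_ext R).

Section PSRing.
Variable R : comNzRingType.
Definition ps0 : ps R := PS (fun _ => 0).
Definition psadd (a b : ps R) : ps R := PS (fun n => pc a n + pc b n).
Definition psopp (a : ps R) : ps R := PS (fun n => - pc a n).
Definition ps1 : ps R := PS (fun n => if n == 0%N then 1 else 0).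
Definition psmul (a b : ps R) : ps R :=
  PS (fun n => \sum_(i < n.+1) pc a i * pc b (n - i)%N).

Lemma psaddA : associative psadd.
Proof. by move=> a b c; apply: ps_ext => n /=; rewrite addrA. Qed.
Lemma psaddC : commutative psadd.
Proof. by move=> a b; apply: ps_ext => n /=; rewrite addrC. Qed.
Lemma psadd0 : left_id ps0 psadd.
Proof. by move=> a; apply: ps_ext => n /=; rewrite add0r. Qed.
Lemma psaddN : left_inverse ps0 psopp psadd.
Proof. by move=> a; apply: ps_ext => n /=; rewrite addNr. Qed.

Lemma psmul_poly N (x y : ps R) (u v : {poly R}) :
  (forall i, (i < N)%N -> u`_i = pc x i) -> (forall i, (i < N)%N -> v`_i = pc y i) ->
  forall n, (n < N)%N -> pc (psmul x y) n = (u * v)`_n.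
Proof.
move=> hu hv n hn; rewrite coefM /=; apply: eq_bigr => i _.
rewrite hu ?hv //; first exact: leq_ltn_trans (leq_subr _ _) hn.
exact: leq_ltn_trans (ltnSE (ltn_ord i)) hn.
Qed.

Definition trunc N (a : ps R) : {poly R} := \poly_(i < N) pc a i.
Lemma truncE N a i : (i < N)%N -> (trunc N a)`_i = pc a i.
Proof. by move=> h; rewrite coef_poly h. Qed.

Lemma psmulA : associative psmul.
Proof.
move=> a b c; apply: ps_ext => n.
have h1 := psmul_poly (@truncE n.+1 a) (@truncE n.+1 b).
have h2 := psmul_poly (@truncE n.+1 b) (@truncE n.+1 c).
rewrite (@psmul_poly n.+1 a (psmul b c) (trunc n.+1 a) (trunc n.+1 b * trunc n.+1 c)) //; last first.
  by move=> i hi; rewrite h2.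
  by move=> i hi; rewrite truncE.
rewrite (@psmul_poly n.+1 (psmul a b) c (trunc n.+1 a * trunc n.+1 b) (trunc n.+1 c)) //.
  by rewrite mulrA.
by move=> i hi; rewrite h1.
by move=> i hi; rewrite truncE.
Qed.

Lemma psmulC : commutative psmul.
Proof.
move=> a b; apply: ps_ext => n.
by rewrite (psmul_poly (@truncE n.+1 a) (@truncE n.+1 b)) //
  (psmul_poly (@truncE n.+1 b) (@truncE n.+1 a)) // mulrC.
Qed.

Lemma psmul1 : left_id ps1 psmul.
Proof.
move=> a; apply: ps_ext => n /=; rewrite big_ord_recl /= mul1r subn0 big1 ?addr0 //.
by move=> i _; rewrite mul0r.
Qed.

Lemma psmulDl : left_distributive psmul psadd.
Proof.
move=> a b c; apply: ps_ext => n /=; rewrite -big_split /=.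
by apply: eq_bigr => i _; rewrite mulrDl.
Qed.

Lemma ps1_neq0 : ps1 != ps0.
Proof. by apply/eqP => /(congr1 (fun s => pc s 0)) /= /eqP; rewrite oner_eq0. Qed.
End PSRing.

HB.instance Definition _ (R : comNzRingType) := GRing.isZmodule.Build (ps R)
  (@psaddA R) (@psaddC R) (@psadd0 R) (@psaddN R).
HB.instance Definition _ (R : comNzRingType) := GRing.Zmodule_isComNzRing.Build (ps R)
  (@psmulA R) (@psmulC R) (@psmul1 R) (@psmulDl R) (@ps1_neq0 R).

Section PSTheory.
Variable R : comNzRingType.
Implicit Types a b : ps R.
Lemma pcD a b n : pc (a + b) n = pc a n + pc b n. Proof. by []. Qed.
Lemma pcN a n : pc (- a) n = - pc a n. Proof. by []. Qed.
Lemma pcB a b n : pc (a - b) n = pc a n - pc b n. Proof. by []. Qed.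
Lemma pc0 n : pc (0 : ps R) n = 0. Proof. by []. Qed.
Lemma pc1 n : pc (1 : ps R) n = if n == 0%N then 1 else 0. Proof. by []. Qed.
Lemma pcM a b n : pc (a * b) n = \sum_(i < n.+1) pc a i * pc b (n - i)%N. Proof. by []. Qed.
End PSTheory.

Lemma taylor2 (S : comNzRingType) (P : {poly S}) t h :
  exists Q, P.[t + h] = P.[t] + h * P^`().[t] + h ^+ 2 * Q.
Proof.
rewrite (@nderiv_taylor_wide _ (size P).+2 P t h (mulrC t h)); last by rewrite leqW.
rewrite big_ord_recl big_ord_recl /= nderivn0 nderivn1 expr0 mulr1 expr1.
exists (\sum_(i < size P) P^`N(i.+2).[t] * h ^+ i).
rewrite big_distrr addrA [h * _]mulrC; congr (_ + _); apply: eq_bigr => i _.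
by rewrite /bump /= !add1n (exprD h 2 i) mulrCA.
Qed.

Lemma nat_aux1 A B i n : (A <= i)%N -> (i <= n)%N -> (n < A + B)%N -> (n - i < B)%N.
Proof.
move/ssrnat.leP=> h1 /ssrnat.leP h2 /ssrnat.ltP h3; apply/ssrnat.ltP.
rewrite -?minusE -?plusE in h3 *; lia.
Qed.

Section PSMore.
Variable R : comNzRingType.
Implicit Types a b : ps R.

Lemma pc_sum I (r : seq I) (P : pred I) (F : I -> ps R) n :
  pc (\sum_(i <- r | P i) F i) n = \sum_(i <- r | P i) pc (F i) n.
Proof. by elim/big_rec2: _ => // i y1 y2 _ <-. Qed.

Lemma pc_natmul a m n : pc (a *+ m) n = pc a n *+ m.
Proof. by elim: m => [|m IH]; rewrite ?mulr0n // !mulrS pcD IH. Qed.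

Lemma pcM_low a b A B : (forall i, (i < A)%N -> pc a i = 0) ->
  (forall j, (j < B)%N -> pc b j = 0) ->
  (forall n, (n < A + B)%N -> pc (a * b) n = 0) /\ pc (a * b) (A + B)%N = pc a A * pc b B.
Proof.
move=> ha hb; split.
  move=> n hn; rewrite pcM big1 // => i _; case: (ltnP i A) => hi.
    by rewrite ha // mul0r.
  rewrite hb ?mulr0 //; apply: (nat_aux1 hi _ hn); exact: ltnSE (ltn_ord i).
have hA : (A < (A + B).+1)%N by rewrite ltnS leq_addr.
rewrite pcM (bigD1 (Ordinal hA)) //= addKn big1 ?addr0 // => i hi.
case: (ltnP i A) => hiA; first by rewrite ha // mul0r.
have hiA' : (A < i)%N.
  rewrite ltn_neqAle hiA andbT; apply: contra hi => /eqP e.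
  by apply/eqP; apply: val_inj; symmetry; exact: e.
rewrite hb ?mulr0 //; have := ltn_ord i; rewrite ltnS => hi2.
apply: (nat_aux1 hiA' hi2); by rewrite ltnSn.
Qed.

Definition mono (i : nat) (c : R) : ps R := PS (fun m => if m == i then c else 0).

Lemma sum_if_eq (F : nat -> R) N m :
  \sum_(i < N) (if m == (i : nat) then F i else 0) = if (m < N)%N then F m else 0.
Proof.
case: ltnP => h.
  rewrite (bigD1 (Ordinal h)) //= eqxx big1 ?addr0 // => i hi.
  rewrite ifN //; apply: contra hi => /eqP e; apply/eqP/val_inj => /=; by rewrite e.
rewrite big1 // => i _; rewrite ifN //; apply/eqP => e.
by move: (ltn_ord i); rewrite -e ltnNge h.
Qed.

Lemma sum_if_mul (F : nat -> R) N n q : (0 < q)%N -> (n < N)%N ->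
  \sum_(i < N) (if n == ((i : nat) * q)%N then F i else 0) =
  if (q %| n)%N then F (n %/ q)%N else 0.
Proof.
move=> hq hn; case: ifP => hd.
  have [j hj] := dvdnP hd; rewrite hj mulnK //.
  under eq_bigr => i _ do rewrite eqn_mul2r gtn_eqF //=.
  rewrite sum_if_eq ifT //; apply: leq_ltn_trans hn; rewrite hj leq_pmulr //.
rewrite big1 // => i _; rewrite ifN //; apply: contraFN hd => /eqP ->.
exact: dvdn_mull.
Qed.

Lemma mono_mul i j x y : mono i x * mono j y = mono (i + j)%N (x * y).
Proof.
apply: ps_ext => m.
have [hlo hat] := @pcM_low (mono i x) (mono j y) i j
  (fun l hl => ifF _ _ (ltn_eqF hl)) (fun l hl => ifF _ _ (ltn_eqF hl)).
have [->|hm] := eqVneq m (i + j)%N.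
  by rewrite hat /= !eqxx.
rewrite pcM /= (negbTE hm) big1 // => l _ /=.
case: eqP => [el|_]; last by rewrite mul0r.
case: eqP => [e|_]; last by rewrite mulr0.
case/eqP: hm; rewrite -e el subnKC //; rewrite -el; exact: (ltnSE (ltn_ord l)).
Qed.

Lemma mono0 : mono 0 1 = 1.
Proof. by apply: ps_ext. Qed.

Lemma mono_exp i x q : mono i x ^+ q = mono (i * q)%N (x ^+ q).
Proof.
elim: q => [|q IH]; first by rewrite muln0 !expr0 mono0.
by rewrite !exprS IH mono_mul mulnS.
Qed.

Lemma sum_mono n (s : ps R) m :
  pc (\sum_(i < n) mono i (pc s i)) m = if (m < n)%N then pc s m else 0.
Proof. by rewrite pc_sum -sum_if_eq. Qed.

Lemma pchar_ps p : p \in [pchar R] -> p \in [pchar (ps R)].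
Proof.
move=> hp; rewrite inE (pcharf_prime hp) /=; apply/eqP/ps_ext => n.
by rewrite pc_natmul pc0 pc1; case: eqP; rewrite ?mul0rn // (mulrn_pchar hp).
Qed.

Lemma expr_sum_pchar (S : comNzRingType) q I (r : seq I) (F : I -> S) :
  [pchar S].-nat q -> (\sum_(i <- r) F i) ^+ q = \sum_(i <- r) F i ^+ q.
Proof.
move=> hq; elim: r => [|x r IH]; last by rewrite !big_cons exprDn_pchar // IH.
by rewrite !big_nil expr0n; case: q hq.
Qed.

Lemma pc_frob p E (s : ps R) n : p \in [pchar R] ->
  pc (s ^+ (p ^ E)%N) n = if (p ^ E %| n)%N then pc s (n %/ p ^ E)%N ^+ (p ^ E)%N else 0.
Proof.
move=> hp; set q := (p ^ E)%N.
have hpS := pchar_ps hp.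
have hq : [pchar (ps R)].-nat q.
  by rewrite /q pnatX (eq_pnat _ (pcharf_eq hpS)) pnat_id ?(pcharf_prime hp).
have q0 : (0 < q)%N by rewrite expn_gt0 prime_gt0 // (pcharf_prime hp).
set t := \sum_(i < n.+1) mono i (pc s i).
have hs : s = t + (s - t) by rewrite addrC subrK.
rewrite {1}hs exprDn_pchar // pcD.
have -> : pc ((s - t) ^+ q) n = 0.
  move: q0; case: (q) => // q' _; rewrite exprS.
  have h1 : forall i, (i < n.+1)%N -> pc (s - t) i = 0.
    by move=> i hi; rewrite pcB /t sum_mono hi subrr.
  have h2 : forall j, (j < 0)%N -> pc ((s - t) ^+ q') j = 0 by [].
  have [hlo _] := @pcM_low (s - t) ((s - t) ^+ q') n.+1 0 h1 h2.
  by apply: hlo; rewrite addn0.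
rewrite addr0 /t expr_sum_pchar //.
under eq_bigr => i _ do rewrite mono_exp.
rewrite pc_sum /=.
have -> : \sum_(i < n.+1) (if n == (i * q)%N then pc s i ^+ q else 0) =
    \sum_(i < n.+1) (if n == ((i : nat) * q)%N then (fun j => pc s j ^+ q) i else 0) by [].
by rewrite (@sum_if_mul (fun j => pc s j ^+ q)).
Qed.
End PSMore.

Section Subfield.
Variables (K : fieldType) (S : {pred K}) (hS : is_subfield S).
Lemma sf1 : 1 \in S. Proof. by case: hS. Qed.
Lemma sfB x y : x \in S -> y \in S -> x - y \in S. Proof. by case: hS => _ h _ _; apply: h. Qed.
Lemma sfM x y : x \in S -> y \in S -> x * y \in S. Proof. by case: hS => _ _ h _; apply: h. Qed.
Lemma sfV x : x \in S -> x^-1 \in S. Proof. by case: hS => _ _ _ h; apply: h. Qed.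
Lemma sf0 : 0 \in S. Proof. by rewrite -(subrr 1) sfB ?sf1. Qed.
Lemma sfN x : x \in S -> - x \in S. Proof. by move=> h; rewrite -sub0r sfB ?sf0. Qed.
Lemma sfD x y : x \in S -> y \in S -> x + y \in S.
Proof. by move=> hx hy; rewrite -(opprK y) sfB ?sfN. Qed.
Lemma sfX x n : x \in S -> x ^+ n \in S.
Proof. by move=> hx; elim: n => [|n IH]; rewrite ?expr0 ?sf1 // exprS sfM. Qed.
Lemma sfMn x n : x \in S -> x *+ n \in S.
Proof. by move=> hx; elim: n => [|n IH]; rewrite ?mulr0n ?sf0 // mulrS sfD. Qed.
Lemma sf_sum I (r : seq I) (F : I -> K) : (forall i, F i \in S) -> \sum_(i <- r) F i \in S.
Proof. by move=> h; elim/big_ind: _ => //; [exact: sf0 | exact: sfD]. Qed.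

Definition overk (s : ps K) := forall n, pc s n \in S.
Lemma overk0 : overk 0. Proof. by move=> n; exact: sf0. Qed.
Lemma overk1 : overk 1. Proof. by move=> n; rewrite pc1; case: eqP => _; [exact: sf1|exact: sf0]. Qed.
Lemma overkD a b : overk a -> overk b -> overk (a + b).
Proof. by move=> ha hb n; rewrite pcD sfD. Qed.
Lemma overkB a b : overk a -> overk b -> overk (a - b).
Proof. by move=> ha hb n; rewrite pcB sfB. Qed.
Lemma overkM a b : overk a -> overk b -> overk (a * b).
Proof. by move=> ha hb n; rewrite pcM sf_sum // => i; rewrite sfM. Qed.
Lemma overkMn a m : overk a -> overk (a *+ m).
Proof. by move=> ha n; rewrite pc_natmul sfMn. Qed.
Lemma overkX a m : overk a -> overk (a ^+ m).
Proof. by move=> ha; elim: m => [|m IH]; [rewrite expr0; exact: overk1 | rewrite exprS; apply: overkM]. Qed.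
Lemma overk_sum I (r : seq I) (F : I -> ps K) : (forall i, overk (F i)) -> overk (\sum_(i <- r) F i).
Proof. by move=> h; elim/big_ind: _ => //; [exact: overk0 | exact: overkD]. Qed.
Lemma overk_horner (P : {poly ps K}) t : (forall i, overk P`_i) -> overk t -> overk P.[t].
Proof.
move=> hP ht; rewrite horner_coef; apply: overk_sum => i.
by apply: overkM => //; apply: overkX.
Qed.
End Subfield.

Lemma subset_overk (K : fieldType) (S T : {pred K}) s :
  {subset S <= T} -> overk S s -> overk T s.
Proof. by move=> h hs n; apply: h. Qed.

Lemma pnat_q (S : nzRingType) p E : p \in [pchar S] -> [pchar S].-nat (p ^ E)%N.
Proof. by move=> hp; rewrite pnatX (eq_pnat _ (pcharf_eq hp)) pnat_id ?(pcharf_prime hp). Qed.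

Section Frob.
Variables (K : fieldType) (k : {pred K}) (hk : is_subfield k) (p : nat) (hp : p \in [pchar K]).

Lemma frob_sub E : {subset k <= [pred y | y ^+ (p ^ E)%N \in k]}.
Proof. by move=> x hx; rewrite inE sfX. Qed.

Lemma frob_subfield E : is_subfield [pred y : K | y ^+ (p ^ E)%N \in k].
Proof.
have hq := pnat_q E hp.
split.
- by rewrite inE expr1n sf1.
- by move=> x y; rewrite !inE => hx hy; rewrite exprDn_pchar // exprNn_pchar // sfB.
- by move=> x y; rewrite !inE => hx hy; rewrite exprMn sfM.
- by move=> x; rewrite !inE => hx; rewrite exprVn sfV.
Qed.

Lemma frob_mono E e y : y ^+ (p ^ E)%N \in k -> y ^+ (p ^ (E + e))%N \in k.
Proof. by move=> h; rewrite expnD exprM sfX. Qed.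
End Frob.

Lemma nat_aux2 sp j p : (1 < sp)%N -> (sp.-1 <= j)%N -> (2 <= p)%N -> (sp <= j * p)%N.
Proof.
move=> h1 h2 h3; have h4 : (j * 2 <= j * p)%N by rewrite leq_mul2l h3 orbT.
apply: leq_trans h4; move/ssrnat.ltP: h1 => h1; move/ssrnat.leP: h2 => h2.
rewrite muln2 -addnn; apply/ssrnat.leP; rewrite -plusE.
have h5 : (sp.-1 + 1)%coq_nat = sp by lia.
lia.
Qed.

Section Main.
Variables (K : fieldType) (k : {pred K}) (hk : is_subfield k) (p : nat) (hp : p \in [pchar K]).

Lemma p_gt1 : (1 < p)%N. Proof. exact: prime_gt1 (pcharf_prime hp). Qed.
Lemma p_gt0 : (0 < p)%N. Proof. exact: prime_gt0 (pcharf_prime hp). Qed.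

Lemma natmul_eq0 (x : ps K) m : ~~ (p %| m)%N -> x *+ m = 0 -> x = 0.
Proof.
move=> hm hx; apply: ps_ext => n; move/(congr1 (fun s => pc s n)): hx.
rewrite pc_natmul pc0 -mulr_natr => /eqP; rewrite mulf_eq0 => /orP [/eqP //|].
by rewrite -(dvdn_pcharf hp) (negbTE hm).
Qed.

Lemma exps_bound (s : ps K) : (forall n, exists e, pc s n ^+ (p ^ e)%N \in k) ->
  forall N, exists E, forall j, (j < N)%N -> pc s j ^+ (p ^ E)%N \in k.
Proof.
move=> hs; elim=> [|N [E hE]]; first by exists 0%N.
have [e he] := hs N; exists (E + e)%N => j; rewrite ltnS leq_eqVlt => /orP [/eqP ->|hj].
  by rewrite addnC; apply: frob_mono.
exact: frob_mono (hE j hj).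
Qed.

Lemma ML m : forall (P : {poly ps K}) (s : ps K), (size P <= m)%N -> P != 0 ->
   (forall i, overk k P`_i) -> P.[s] = 0 ->
   (forall n, exists e, pc s n ^+ (p ^ e)%N \in k) ->
   exists E, forall n, pc s n ^+ (p ^ E)%N \in k.
Proof.
elim: m => [|m IH] P s hsz hP0 hPk hPs hs.
  by move: hP0; rewrite -size_poly_eq0 -leqn0 hsz.
have hPk' : forall i, overk k P^`()`_i.
  by move=> i; rewrite coef_deriv; apply: overkMn.
have [D0|Dn0] := eqVneq P^`() 0.
  have hsP : (1 < size P)%N.
    rewrite ltnNge; apply/negP => h1; move: hPs; rewrite (size1_polyC h1) hornerC => e.
    by move: hP0; rewrite (size1_polyC h1) e polyC0 eqxx.
  have hzero : forall j, ~~ (p %| j)%N -> P`_j = 0.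
    case=> [|j] hj; first by rewrite dvdn0 in hj.
    apply: (natmul_eq0 hj); by rewrite -coef_deriv D0 coef0.
  pose R := \poly_(i < size P) P`_(i * p)%N.
  have hRP : R \Po 'X^p = P.
    apply/polyP => j; rewrite coef_comp_poly_Xn ?p_gt0 //; case: ifP => hd; last first.
      by rewrite hzero ?hd.
    rewrite coef_poly; case: ifP => hj; first by rewrite divnK.
    rewrite nth_default //; apply: leq_trans _ (leq_div j p); by rewrite leqNgt hj.
  have hR0 : R != 0 by apply: contra hP0 => /eqP hR; rewrite -hRP hR comp_poly0.
  have hRs : R.[s ^+ p] = 0 by rewrite -hornerXn -horner_comp hRP.
  have hRsz : (size R <= m)%N.
    apply: leq_trans (_ : (size P).-1 <= m)%N; last first.
      by rewrite -ltnS prednK ?(ltn_trans _ hsP).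
    apply/leq_sizeP => j hj; rewrite coef_poly; case: ifP => // _.
    by rewrite nth_default // nat_aux2 // p_gt1.
  have hRk : forall i, overk k R`_i.
    by move=> i; rewrite coef_poly; case: ifP => _; [apply: hPk | apply: overk0].
  have hsp : forall n, exists e, pc (s ^+ p) n ^+ (p ^ e)%N \in k.
    move=> n; have := pc_frob 1 s n hp; rewrite expn1 => ->.
    case: ifP => _; last by exists 0%N; rewrite expr0n /= sf0.
    have [e he] := hs (n %/ p)%N; exists e; by rewrite -exprM mulnC exprM sfX.
  have [E hE] := IH R (s ^+ p) hRsz hR0 hRk hRs hsp.
  exists E.+1 => n; move: (hE (n * p)%N); have := pc_frob 1 s (n * p) hp.
  rewrite expn1 => ->; rewrite dvdn_mull // mulnK ?p_gt0 //.
  by rewrite -exprM expnS.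
have hsz' : (size P^`() <= m)%N.
  by rewrite -ltnS; apply: leq_trans (lt_size_deriv hP0) hsz.
have [DS0|DSn0] := eqVneq (P^`()).[s] 0.
  exact: (IH P^`() s hsz' Dn0 hPk' DS0 hs).
(* Case A: Hensel *)
set D := (P^`()).[s] in DSn0.
have hex : exists n, pc D n != 0.
  apply: NNPP => hn; case/eqP: DSn0; apply: ps_ext => n; rewrite pc0.
  by apply/eqP; apply/negPn/negP => h; apply: hn; exists n.
have [v hv hmin] := ex_minnP hex.
have hDlow : forall j, (j < v)%N -> pc D j = 0.
  move=> j hj; apply/eqP; apply/negPn/negP => h.
  by move: (hmin j h); rewrite leqNgt hj.
have [E0 hE0] := exps_bound hs v.+1.
exists E0.
set k' := [pred y : K | y ^+ (p ^ E0)%N \in k].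
have hk' : is_subfield k' := frob_subfield hk hp E0.
have hkk' : {subset k <= k'} := frob_sub hk p E0.
suff : forall N n, (n < N)%N -> pc s n \in k' by move=> h n; apply: (h n.+1).
elim=> [//|N IHN] n; rewrite ltnS leq_eqVlt => /orP [/eqP ->{n}|]; last exact: IHN.
case: (ltnP N v.+1) => hNv; first exact: hE0.
pose t := PS (fun i => if (i < N)%N then pc s i else 0).
have ht : overk k' t by move=> i /=; case: ifP => hi; [exact: IHN | exact: sf0].
set h := s - t.
have hts : t + h = s by rewrite /h addrC subrK.
have hlow : forall i, (i < N)%N -> pc h i = 0.
  by move=> i hi; rewrite pcB /= hi subrr.
have hhN : pc h N = pc s N by rewrite pcB /= ltnn subr0.
have h0 : forall j, (j < 0)%N -> pc (_ : ps K) j = 0 by [].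
have [Q2 hQ2] := taylor2 P^`() t h.
have hD : forall j, (j < N)%N -> pc (P^`()).[t] j = pc D j.
  move=> j hj; rewrite /D -hts hQ2 !pcD.
  have [lo1 _] := @pcM_low _ h (P^`()^`()).[t] N 0 hlow (h0 _).
  have [lo2 _] := @pcM_low _ h (h * Q2) N 0 hlow (h0 _).
  rewrite lo1 ?addn0 // expr2 -mulrA lo2 ?addn0 //.
  by rewrite !addr0.
have hvN : (v < N)%N by [].
have [Q hQ] := taylor2 P t h.
have e0 : pc (P.[s]) (N + v)%N = 0 by rewrite hPs.
rewrite -hts hQ !pcD in e0.
have hDtlow : forall j, (j < v)%N -> pc (P^`()).[t] j = 0.
  by move=> j hj; rewrite hD ?hDlow // (ltn_trans hj).
have [_ at1] := @pcM_low _ h (P^`()).[t] N v hlow hDtlow.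
rewrite at1 hhN hD // in e0.
have hNN : forall i, (i < N + N)%N -> pc (h * h) i = 0.
  by have [lo _] := @pcM_low _ h h N N hlow hlow; exact: lo.
have [lo3 _] := @pcM_low _ (h * h) Q (N + N) 0 hNN (h0 _).
rewrite expr2 lo3 ?addr0 in e0; last by rewrite addn0 ltn_add2l.
have hl : pc D v != 0 by [].
have hY : pc s N * pc D v = - pc P.[t] (N + v)%N.
  by apply/eqP; rewrite -addr_eq0 addrC e0.
have -> : pc s N = - pc P.[t] (N + v)%N * (pc D v)^-1 by rewrite -hY mulfK.
apply: (sfM hk'); first apply: (sfN hk').
  by apply: (overk_horner hk') => // i; apply: subset_overk hkk' (hPk i).
apply: (sfV hk'); rewrite -hD //; apply: (overk_horner hk') => // i.
exact: subset_overk hkk' (hPk' i).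
Qed.
End Main.

Section Laur.
Variable K : comNzRingType.

Lemma lcoef_ladd (s t : lser K) i : lcoef (ladd s t) i = lcoef s i + lcoef t i.
Proof.
rewrite {1}/lcoef /ladd /=; case: ifP => hm.
  by rewrite gez0_abs ?subr_ge0 // (addrC (Num.min _ _)) subrK.
move/negbT: hm; rewrite ge_min negb_or => /andP [h1 h2].
by rewrite /lcoef (negbTE h1) (negbTE h2) addr0.
Qed.

Lemma lcoef_lzero i : lcoef (@lzero K) i = 0.
Proof. by rewrite /lcoef; case: ifP. Qed.

Lemma lcoef_foldr (l : seq (lser K)) i :
  lcoef (foldr (@ladd K) (@lzero K) l) i = \sum_(x <- l) lcoef x i.
Proof.
elim: l => [|x l IH]; first by rewrite big_nil lcoef_lzero.
by rewrite big_cons /= lcoef_ladd IH.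
Qed.

Lemma lcoef_eval (cs : seq (lser K)) sigma i :
  lcoef (lpoly_eval cs sigma) i =
  \sum_(j < size cs) lcoef (lmul (nth (@lzero K) cs j) (lexp sigma j)) i.
Proof.
rewrite /lpoly_eval lcoef_foldr big_map.
have -> : iota 0 (size cs) = index_iota 0 (size cs) by rewrite /index_iota subn0.
by rewrite big_mkord.
Qed.

Lemma lmul2 (a b : lser K) : PS (lmul a b).2 = PS a.2 * PS b.2.
Proof. by []. Qed.

Lemma lexp2 (sigma : lser K) j : PS (lexp sigma j).2 = PS sigma.2 ^+ j.
Proof.
elim: j => [|j IH]; first by [].
by rewrite exprS -IH /lexp iterS lmul2.
Qed.

Lemma lexp1 (sigma : lser K) j : (lexp sigma j).1 = (lexp sigma j).1.
Proof. by []. Qed.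

Lemma pc_xmul Kn (b : ps K) n :
  pc (mono Kn 1 * b) n = if (Kn <= n)%N then pc b (n - Kn)%N else 0.
Proof.
rewrite pcM.
have -> : \sum_(i < n.+1) pc (mono Kn 1) i * pc b (n - i)%N =
  \sum_(i < n.+1) (if Kn == (i : nat) then (fun j => pc b (n - j)%N) i else 0).
  by apply: eq_bigr => i _ /=; rewrite eq_sym; case: eqP; rewrite ?mul1r ?mul0r.
by rewrite (@sum_if_eq _ (fun j => pc b (n - j)%N)) ltnS.
Qed.

Lemma lcoef_shift (M : int) (Kn : nat) (l : lser K) n : M + l.1 = Posz Kn ->
  lcoef l (n%:Z - M) = if (Kn <= n)%N then l.2 (n - Kn)%N else 0.
Proof.
case: l => e f /= hK; have he : e = Posz Kn - M by rewrite -hK addrC addKr.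
rewrite /lcoef /= he lerD2r lez_nat; case: ifP => // hn.
by rewrite opprB addrA subrK subzn.
Qed.

Lemma lcoef_pair_shift (e : int) (f : nat -> K) m : lcoef (e, f) (e + m%:Z) = f m.
Proof. by rewrite /lcoef /= lerDl (addrC e) addrK. Qed.
Lemma lcoef_lmul (a b : lser K) e (f : ps K) i :
  a.1 + b.1 = e -> PS a.2 * PS b.2 = f -> lcoef (lmul a b) i = lcoef (e, pc f) i.
Proof. by move=> h1 h2; rewrite /lcoef /= h1 -h2. Qed.

Lemma absz_add_ge0 (a : int) : 0 <= Posz `|a| + a.
Proof. case: a => n /=; first by rewrite -PoszD. by rewrite NegzE addrN. Qed.
End Laur.
Unset Implicit Arguments.

Theorem theorem2p4 (K : closedFieldType) (k : {pred K}) (p : nat)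
  (hk : is_subfield k)
  (hp : p \in [pchar K])
  (hclos : forall x : K, algebraic_over k x)
  (d : int) (alpha : int -> K)
  (hd : forall i, i < d -> alpha i = 0)
  (hL : forall y, in_gen_field k alpha y ->
          exists n : nat, y ^+ (p ^ n) \in k) :
  lser_algebraic k ((d, fun n : nat => alpha (d + n%:Z)) : lser K) <->
  exists n : nat, forall y, in_gen_field k alpha y -> y ^+ (p ^ n) \in k.
Proof.
set sigma := ((d, fun n : nat => alpha (d + n%:Z)) : lser K).
set s := PS sigma.2.
have hsn : forall n, pc s n = alpha (d + n%:Z) by [].
have hgen : forall i, in_gen_field k alpha (alpha i) by move=> i S _ _ h; exact: h.
split.
  case=> cs [Hover [j0 Hj0] Heq].
  pose T j := lmul (nth (@lzero K) cs j) (lexp sigma j).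
  pose Mn := (\sum_(j < size cs) `|(T j).1|)%N.
  have hM : forall j, (j < size cs)%N -> 0 <= Posz Mn + (T j).1.
    move=> j hj; apply: le_trans (absz_add_ge0 (T j).1) _.
    rewrite lerD2r lez_nat /Mn (bigD1 (Ordinal hj)) //=; exact: leq_addr.
  pose Kj j := absz (Posz Mn + (T j).1).
  have hK : forall j, (j < size cs)%N -> Posz Mn + (T j).1 = Posz (Kj j).
    by move=> j hj; rewrite /Kj gez0_abs ?hM.
  pose P := \poly_(j < size cs) (mono (Kj j) 1 * PS (nth (@lzero K) cs j).2).
  have hPs : P.[s] = 0.
    apply: ps_ext => n; rewrite horner_poly pc_sum pc0.
    transitivity (lcoef (lpoly_eval cs sigma) (Posz n - Posz Mn)); last exact: Heq.
    rewrite lcoef_eval; apply: eq_bigr => j _.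
    rewrite -mulrA /s -lexp2 -lmul2 pc_xmul (@lcoef_shift _ _ (Kj j)) //; exact: hK.
  have hP0 : P != 0.
    have hj0 : (j0 < size cs)%N.
      rewrite ltnNge; apply/negP => h; apply: Hj0 => i.
      by rewrite nth_default // lcoef_lzero.
    have [i hi] : exists i, lcoef (nth (@lzero K) cs j0) i != 0.
      apply: NNPP => hn; apply: Hj0 => i; apply/eqP; apply/negPn/negP => h.
      by apply: hn; exists i.
    move: hi; set c := nth _ cs j0; rewrite /lcoef; case: ifP => hci; last by rewrite eqxx.
    move=> hne; apply/eqP => hP.
    move: (congr1 (fun Q : {poly ps K} => pc Q`_j0 (Kj j0 + `|i - c.1|)%N) hP).
    rewrite coef_poly hj0 coef0 pc0 pc_xmul leq_addr addKn => e.
    by apply: (negP hne); apply/eqP; exact: e.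
  have hPk : forall i, overk k P`_i.
    move=> i n; rewrite coef_poly; case: ifP => hi; last exact: sf0.
    rewrite pc_xmul; case: ifP => _; last exact: sf0.
    have hl : forall (l : lser K) m, l.2 m = lcoef l (l.1 + Posz m).
      by case=> e f m; rewrite lcoef_pair_shift.
    change ((nth (@lzero K) cs i).2 (n - Kj i)%N \in k); rewrite hl; exact: Hover.
  have hs : forall n, exists e, pc s n ^+ (p ^ e)%N \in k.
    by move=> n; rewrite hsn; apply: hL.
  have [E hE] := ML hk hp (leqnn (size P)) hP0 hPk hPs hs.
  exists E => y hy; apply: (hy [pred y | y ^+ (p ^ E)%N \in k]).
  - exact: frob_subfield.
  - exact: frob_sub.
  move=> i; rewrite inE; case: (ltP i d) => hid.
    rewrite hd // expr0n /= expn_eq0 eqn0Ngt prime_gt0 ?(pcharf_prime hp) //.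
    exact: sf0.
  have := hE `|i - d|%N; rewrite hsn gez0_abs ?subr_ge0 //.
  by rewrite (addrC d) subrK.
case=> E hE.
have q0 : (0 < p ^ E)%N by rewrite expn_gt0 prime_gt0 // (pcharf_prime hp).
set c := lexp sigma (p ^ E)%N.
pose negc : lser K := (c.1, fun n => - c.2 n).
pose f := fun j => if j == 0%N then negc else if j == (p ^ E)%N then @lone K else @lzero K.
exists (mkseq f (p ^ E)%N.+1).
have hnth : forall j, nth (@lzero K) (mkseq f (p ^ E)%N.+1) j =
    if (j < (p ^ E)%N.+1)%N then f j else @lzero K.
  move=> j; case: ifP => hj; first by rewrite nth_mkseq.
  by rewrite nth_default // size_mkseq leqNgt hj.
have hc : forall i, lcoef c i \in k.
  move=> i; rewrite /lcoef; case: ifP => _; last exact: sf0.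
  have -> : c.2 = pc (PS c.2) by [].
  rewrite /c lexp2 -/s pc_frob //; case: ifP => _; last exact: sf0.
  rewrite hsn; apply: hE; exact: hgen.
have hq0 : ((p ^ E)%N == 0%N) = false by rewrite eqn0Ngt q0.
split.
- move=> j i; rewrite hnth; case: ifP => _; last by rewrite lcoef_lzero; exact: sf0.
  rewrite /f; case: eqP => _.
    have := hc i; rewrite /lcoef /=; case: ifP => _ h; [exact: sfN | exact: sf0].
  case: eqP => _.
    rewrite /lcoef /=; case: ifP => _; last exact: sf0.
    by case: eqP => _; [exact: sf1 | exact: sf0].
  by rewrite lcoef_lzero; exact: sf0.
- exists (p ^ E)%N; rewrite hnth ltnSn /f hq0 eqxx => h.
  by move: (h 0); rewrite /lcoef /= => /eqP; rewrite oner_eq0.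
move=> i; rewrite lcoef_eval size_mkseq.
have hterm : forall j : 'I_(p ^ E)%N.+1,
    lcoef (lmul (nth (@lzero K) (mkseq f (p ^ E)%N.+1) j) (lexp sigma j)) i =
    (if 0%N == (j : nat) then (fun _ => - lcoef c i) j else 0) +
    (if (p ^ E)%N == (j : nat) then (fun _ => lcoef c i) j else 0).
  move=> j; rewrite hnth ltn_ord /f.
  case: eqP => [j0|jn0].
    rewrite j0 eqxx hq0 addr0 /=.
    rewrite (@lcoef_lmul _ _ _ c.1 (- PS c.2)) /=; first last.
    - by rewrite mulr1.
    - by rewrite addr0.
    by rewrite /lcoef /=; case: ifP => //; rewrite oppr0.
  case: eqP => [jq|jnq].
    rewrite eq_sym (introF eqP jn0) jq eqxx add0r /=.
    rewrite (@lcoef_lmul _ _ _ c.1 (PS c.2)) /=; first last.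
    - by rewrite mul1r.
    - by rewrite add0r.
    by [].
  rewrite eq_sym (introF eqP jn0) eq_sym (introF eqP jnq) addr0.
  rewrite (@lcoef_lmul _ _ _ ((@lzero K).1 + (lexp sigma j).1) 0) /=; first last.
  - by rewrite mul0r.
  - by [].
  by rewrite /lcoef /=; case: ifP.
under eq_bigr => j _ do rewrite hterm.
rewrite big_split /= (@sum_if_eq _ (fun _ => - lcoef c i)) (@sum_if_eq _ (fun _ => lcoef c i)).
by rewrite ltnSn /= addNr.
Qed.
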